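(* Let $q$ be a prime power, $Q\in\mathbb{P}^2(\mathbb{F}_q)$, and $L_1,\dots,L_{q+1}$ the $\mathbb{F}_q$-lines through $Q$. Then for all sufficiently large $d$, \[ \mu_d(\mathcal{A}_0(Q))\le\frac{1}{1-q^{-2}}\prod_{i=1}^{q+1}\mu_d\big(R_{\mathrm{homog}}\setminus\mathcal{T}_{L_i,Q}\big), \] and for each $1\le j\le q+1$, \[ \mu_d(\mathcal{A}_{L_j}(Q))\le\mu_d(\mathcal{T}_{L_j,Q})\prod_{i\ne j}\mu_d\big(R_{\mathrm{homog}}\setminus\mathcal{T}_{L_i,Q}\big). \] Consequently, both inequalities also hold with $\mu_d$ replaced by $\mu$.
   Context: Let $R=\mathbb{F}_q[x,y,z]$, $R_d$ the homogeneous polynomials of degree $d$ (including $0$), $R_{\mathrm{homog}}=\bigcup_{d\ge1}R_d$, $\mu_d(\mathcal{A})=\#(\mathcal{A}\cap R_d)/\#R_d$, $\mu(\mathcal{A})=\lim_d\mu_d(\mathcal{A})$. $\mathcal{S}_Q$ is the set of $f\in R_{\mathrm{homog}}$ with $\{f=0\}$ singular at $Q$. For an $\mathbb{F}_q$-line $L\ni Q$, $\mathcal{T}_{L,Q}$ is the set of $f\in R_{\mathrm{homog}}$ whose restriction to $L$ vanishes to order at least $2$ at $Q$ (''$\{f=0\}$ tangent to $L$ at $Q$'', including the singular case). Define $\mathcal{A}_0(Q)=R_{\mathrm{homog}}\setminus\bigcup_{i=1}^{q+1}\mathcal{T}_{L_i,Q}$ and, for an $\mathbb{F}_q$-line $L\ni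 Q$, $\mathcal{A}_L(Q)=\mathcal{T}_{L,Q}\setminus\mathcal{S}_Q$. *)

(* Defs.v *)
From HB Require Import structures.
From mathcomp Require Import all_boot all_order all_algebra.
From mathcomp Require Import all_classical all_reals all_analysis.
Set Implicit Arguments. Unset Strict Implicit. Unset Printing Implicit Defensive.
Import Order.TTheory GRing.Theory Num.Theory.
Local Open Scope ring_scope.

(* Monomials x^a y^b z^c of degree d, encoded by (a,b) with a + b <= d,
   c = d - a - b. *)
Definition mon (d : nat) := {t : 'I_d.+1 * 'I_d.+1 | (t.1 + t.2 <= d)%N}.

Definition mexp (d : nat) (k : nat) (t : mon d) : nat :=
  let a := nat_of_ord (val t).1 in let b := nat_of_ord (val t).2 in
  if k == 0%N then a else if k == 1%N then b else (d - a - b)%N.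

(* R_d : homogeneous polynomials of degree d (0 included) in F[x,y,z],
   represented by their coefficient vectors. *)
Definition homog (F : finFieldType) (d : nat) := {ffun mon d -> F}.

Definition coord (F : fieldType) (v : 'rV[F]_3) (k : nat) : F := v ord0 (inord k).

Definition evalh (F : finFieldType) d (f : homog F d) (S : comNzRingType)
  (c : F -> S) (X : nat -> S) : S :=
  \sum_(t : mon d) c (f t) * \prod_(k < 3) X k ^+ mexp k t.

Definition valh (F : finFieldType) d (f : homog F d) (Q : 'rV[F]_3) : F :=
  evalh f id (coord Q).

Definition pderh (F : finFieldType) d (f : homog F d) (i : nat) (Q : 'rV[F]_3) : F :=
  \sum_(t : mon d) f t * (mexp i t)%:R *
     \prod_(k < 3) coord Q k ^+ (mexp k t - (k == i :> nat))%N.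

Definition singularb (F : finFieldType) d (f : homog F d) (Q : 'rV[F]_3) : bool :=
  (valh f Q == 0) && [forall i : 'I_3, pderh f i Q == 0].

(* the line {x : l . x = 0} given by a nonzero linear form l *)
Definition on_line (F : fieldType) (l P : 'rV[F]_3) : bool :=
  \sum_(k < 3) coord l k * coord P k == 0.

(* restriction of f to the line through Q and P, parametrized by
   t |-> Q + t P (affine chart of the line containing Q at t = 0) *)
Definition restr (F : finFieldType) d (f : homog F d) (Q P : 'rV[F]_3) : {poly F} :=
  evalh f (fun a => a%:P) (fun k => (coord Q k)%:P + (coord P k)%:P * 'X).

(* T_{L,Q}: the restriction of f to L vanishes to order >= 2 at Q *)
Definition tangentb (F : finFieldType) d (f : homog F d) (Q l : 'rV[F]_3) : bool :=
  [forall P : 'rV[F]_3, on_line l P ==> ~~ (P <= Q)%MS ==> dvdp ('X ^+ 2) (restr f Q P)].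

Definition mud (R : realType) (F : finFieldType) d (A : pred (homog F d)) : R :=
  (#|[set f : homog F d | A f]|%:R) / (#|{: homog F d}|%:R).

Definition A0b (F : finFieldType) d (Q : 'rV[F]_3) (Ls : seq 'rV[F]_3) (f : homog F d) : bool :=
  all (fun l => ~~ tangentb f Q l) Ls.

Definition ALb (F : finFieldType) d (Q l : 'rV[F]_3) (f : homog F d) : bool :=
  tangentb f Q l && ~~ singularb f Q.

Definition lines_through (F : finFieldType) (Q : 'rV[F]_3) (Ls : seq 'rV[F]_3) : Prop :=
  (forall l, l \in Ls -> l != 0 /\ on_line l Q) /\
  (forall l', l' != 0 -> on_line l' Q -> count (fun l => (l' == l)%MS) Ls = 1%N).

(* Main.v *)
Require Import Defs.
From HB Require Import structures.
From mathcomp Require Import all_boot all_order all_algebra.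
From mathcomp Require Import all_classical all_reals all_analysis.
From mathcomp Require Import ring lra zify.
Import Order.TTheory GRing.Theory Num.Theory.
Local Open Scope ring_scope.
Set Implicit Arguments. Unset Strict Implicit.
Notation coord := Defs.coord.

Section Alg.
Variable F : finFieldType.

Lemma sum3 (S : nmodType) (g : nat -> S) : \sum_(k < 3) g k = g 0%N + g 1%N + g 2%N.
Proof. by rewrite !big_ord_recr big_ord0 /= add0r. Qed.
Lemma prod3 (S : comNzRingType) (g : nat -> S) : \prod_(k < 3) g k = g 0%N * g 1%N * g 2%N.
Proof. by rewrite !big_ord_recr big_ord0 /= mul1r. Qed.

Definition dotp (a b : 'rV[F]_3) := \sum_(k < 3) coord a k * coord b k.
Lemma dot3 a b : dotp a b = coord a 0 * coord b 0 + coord a 1 * coord b 1 + coord a 2 * coord b 2.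
Proof. by rewrite /dotp (sum3 (fun k => coord a k * coord b k)). Qed.

Lemma coord_row (E : nat -> F) k : (k < 3)%N -> coord (\row_(i < 3) E i) k = E k.
Proof. by move=> hk; rewrite /coord mxE inordK. Qed.
Lemma coordZ (c : F) (a : 'rV[F]_3) k : coord (c *: a) k = c * coord a k.
Proof. by rewrite /coord mxE. Qed.
Lemma coordD (a b : 'rV[F]_3) k : coord (a + b) k = coord a k + coord b k.
Proof. by rewrite /coord mxE. Qed.
Lemma coordB (a b : 'rV[F]_3) k : coord (a - b) k = coord a k - coord b k.
Proof. by rewrite /coord !mxE. Qed.
Lemma coord0v k : coord (0 : 'rV[F]_3) k = 0.
Proof. by rewrite /coord mxE. Qed.

Lemma vec3P (a b : 'rV[F]_3) : coord a 0 = coord b 0 -> coord a 1 = coord b 1 ->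
  coord a 2 = coord b 2 -> a = b.
Proof.
move=> h0 h1 h2; apply/rowP => j.
have: j = inord (val j) by rewrite inord_val.
case: j => [[|[|[|//]]] hj] /= ->; [exact h0|exact h1|exact h2].
Qed.

Lemma exp_pred (S : comNzRingType) (x : S) (e : nat) :
  e%:R * x ^+ (e - 1) * x = e%:R * x ^+ e.
Proof. by case: e => [|e]; rewrite ?mul0r // subn1 /= -mulrA -exprSr. Qed.

Variable d : nat.
Lemma mexp_sum (t : mon d) : (mexp 0 t + mexp 1 t + mexp 2 t = d)%N.
Proof. rewrite /mexp /=; case: t => [[a b]] /= h; lia. Qed.

Definition Mt (Q : 'rV[F]_3) (t : mon d) :=
  coord Q 0 ^+ mexp 0 t * coord Q 1 ^+ mexp 1 t * coord Q 2 ^+ mexp 2 t.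
Definition Dt (Q : 'rV[F]_3) (i : nat) (t : mon d) :=
  (mexp i t)%:R * (coord Q 0 ^+ (mexp 0 t - (0 == i))%N *
    coord Q 1 ^+ (mexp 1 t - (1 == i))%N * coord Q 2 ^+ (mexp 2 t - (2 == i))%N).

Lemma valhE (f : homog F d) Q : valh f Q = \sum_t f t * Mt Q t.
Proof.
rewrite /valh /evalh; apply: eq_bigr => t _.
by rewrite (prod3 (fun k => coord Q k ^+ mexp k t)).
Qed.
Lemma pderhE (f : homog F d) i Q : pderh f i Q = \sum_t f t * Dt Q i t.
Proof.
rewrite /pderh; apply: eq_bigr => t _.
by rewrite (prod3 (fun k => coord Q k ^+ (mexp k t - (k == i :> nat))%N)) /Dt !mulrA.
Qed.

Definition Jg (f : homog F d) Q : 'rV[F]_3 := \row_(i < 3) pderh f i Q.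

Lemma Euler (f : homog F d) Q : dotp (Jg f Q) Q = d%:R * valh f Q.
Proof.
rewrite dot3 /Jg !(coord_row (fun i => pderh f i Q)) // !pderhE valhE !mulr_suml mulr_sumr -!big_split.
apply: eq_bigr => t _ /=; rewrite /Dt /Mt /= !subn0.
have hs := mexp_sum t.
have -> : (d%:R : F) = (mexp 0 t)%:R + (mexp 1 t)%:R + (mexp 2 t)%:R by rewrite -!natrD hs.
move: (mexp 0 t) (mexp 1 t) (mexp 2 t) => a b c.
by case: a => [|a]; case: b => [|b]; case: c => [|c];
  rewrite ?subn1 /= ?mul0r ?mulr0 ?add0r ?addr0 ?exprS; ring.
Qed.

Lemma pow_lin (a b : F) e : exists r : {poly F},
  (a%:P + b%:P * 'X) ^+ e = (a ^+ e)%:P + (e%:R * a ^+ (e - 1) * b)%:P * 'X + 'X^2 * r.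
Proof.
elim: e => [|e [r IH]].
  by exists 0; rewrite expr0 !mul0r mulr0 !addr0.
exists (b%:P * (e%:R * a ^+ (e - 1) * b)%:P + (a%:P + b%:P * 'X) * r).
have h1 : a ^+ e.+1 = a * a ^+ e by rewrite exprS.
have h2 : (e.+1%:R * a ^+ (e.+1 - 1) * b) = a * (e%:R * a ^+ (e - 1) * b) + b * a ^+ e.
  rewrite subn1 /= mulrS; have H := exp_pred a e.
  transitivity (a ^+ e * b + e%:R * a ^+ e * b); first ring.
  rewrite -H; ring.
rewrite exprS IH h1 h2 !polyCM polyCD !polyCM; ring.
Qed.

Lemma restr_dvd (f : homog F d) (Q P : 'rV[F]_3) :
  'X^2 %| restr f Q P - ((valh f Q)%:P + (dotp (Jg f Q) P)%:P * 'X).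
Proof.
rewrite dot3 /Jg !(coord_row (fun i => pderh f i Q)) // !pderhE valhE.
rewrite !mulr_suml -!big_split /= rmorph_sum /restr /evalh.
rewrite (rmorph_sum (GRing.RMorphism.clone _ _ polyC _)) mulr_suml -big_split -sumrB /=.
apply: (big_ind (fun p => 'X^2 %| p)); [exact: dvdp0 | move=> p1 p2; exact: dvdp_add|].
move=> t _; rewrite (prod3 (fun k => ((coord Q k)%:P + (coord P k)%:P * 'X) ^+ mexp k t)).
have [r0 ->] := pow_lin (coord Q 0) (coord P 0) (mexp 0 t).
have [r1 ->] := pow_lin (coord Q 1) (coord P 1) (mexp 1 t).
have [r2 ->] := pow_lin (coord Q 2) (coord P 2) (mexp 2 t).
rewrite /Mt /Dt /= !subn0.
set A0 := coord Q 0 ^+ mexp 0 t; set A1 := coord Q 1 ^+ mexp 1 t; set A2 := coord Q 2 ^+ mexp 2 t.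
set B0 := (mexp 0 t)%:R * coord Q 0 ^+ (mexp 0 t - 1) * coord P 0.
set B1 := (mexp 1 t)%:R * coord Q 1 ^+ (mexp 1 t - 1) * coord P 1.
set B2 := (mexp 2 t)%:R * coord Q 2 ^+ (mexp 2 t - 1) * coord P 2.
have -> : f t * ((mexp 0 t)%:R * (coord Q 0 ^+ (mexp 0 t - 1) * A1 * A2)) * coord P 0 +
   f t * ((mexp 1 t)%:R * (A0 * coord Q 1 ^+ (mexp 1 t - 1) * A2)) * coord P 1 +
   f t * ((mexp 2 t)%:R * (A0 * A1 * coord Q 2 ^+ (mexp 2 t - 1))) * coord P 2 =
   f t * (B0 * A1 * A2 + A0 * B1 * A2 + A0 * A1 * B2) by rewrite /B0 /B1 /B2; ring.
clearbody A0 A1 A2 B0 B1 B2.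
rewrite !(polyCM, polyCD).
set p0 := A0%:P + B0%:P * 'X; set p1 := A1%:P + B1%:P * 'X; set p2 := A2%:P + B2%:P * 'X.
apply/dvdpP; exists ((f t)%:P * (r0 * p1 * p2 + p0 * r1 * p2 + p0 * p1 * r2 +
   'X^2 * (r0 * r1 * p2 + r0 * p1 * r2 + p0 * r1 * r2) + 'X^4 * (r0 * r1 * r2) +
   B0%:P * B1%:P * A2%:P + B0%:P * A1%:P * B2%:P + A0%:P * B1%:P * B2%:P + B0%:P * B1%:P * B2%:P * 'X)).
rewrite /p0 /p1 /p2; ring.
Qed.

Lemma dvdX2 (a b : F) : ('X^2 %| a%:P + b%:P * 'X) = (a == 0) && (b == 0).
Proof.
apply/idP/idP; last by case/andP => /eqP -> /eqP ->; rewrite mul0r addr0 dvdp0.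
move=> H.
have p0 : a%:P + b%:P * 'X = 0.
  apply/eqP; apply: contraTT H => Hn.
  apply/negP => /(dvdp_leq Hn); rewrite size_polyXn.
  have: (size (a%:P + b%:P * 'X)%R <= 2)%N.
    apply: leq_trans (size_polyD _ _) _; rewrite geq_max size_polyC.
    case: (a != 0) => //=; apply: leq_trans (size_polyMleq _ _) _; rewrite size_polyX size_polyC; by case: (b != 0).
  by move=> h1 h2; have := leq_trans h2 h1.
have := congr1 (fun p : {poly F} => p`_0) p0; have := congr1 (fun p : {poly F} => p`_1) p0.
rewrite !coefD !coefC !coefMX /= !coefC /= add0r addr0 => -> ->.
by rewrite eqxx.
Qed.

Definition mk3 (a b c : F) : 'rV[F]_3 := \row_(j < 3) [:: a; b; c]`_j.
Lemma mk3_0 a b c : coord (mk3 a b c) 0 = a. Proof. by rewrite /mk3 (coord_row (fun j => [:: a; b; c]`_j)). Qed.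
Lemma mk3_1 a b c : coord (mk3 a b c) 1 = b. Proof. by rewrite /mk3 (coord_row (fun j => [:: a; b; c]`_j)). Qed.
Lemma mk3_2 a b c : coord (mk3 a b c) 2 = c. Proof. by rewrite /mk3 (coord_row (fun j => [:: a; b; c]`_j)). Qed.

Lemma nz3 (v : 'rV[F]_3) : v != 0 -> [\/ coord v 0 != 0, coord v 1 != 0 | coord v 2 != 0].
Proof.
move=> hv; apply/or3P; apply: contraNT hv; rewrite !negb_or !negbK => /and3P[/eqP h0 /eqP h1 /eqP h2].
by apply/eqP; apply: vec3P; rewrite coord0v.
Qed.

Lemma lin_solve (x y z u : F) : u != 0 -> x * u = y * z -> x = y / u * z.
Proof. by move=> hu e; rewrite mulrAC -e mulfK. Qed.

Ltac lin h := apply/eqP; rewrite -subr_eq0; apply/eqP; rewrite -h; ring.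

Lemma kernel_prop (l g : 'rV[F]_3) : l != 0 ->
  (forall P, dotp l P = 0 -> dotp g P = 0) -> exists c, g = c *: l.
Proof.
move=> /nz3 hl H.
case: hl => hk.
- exists (coord g 0 / coord l 0).
  have h1 := H (mk3 (- coord l 1) (coord l 0) 0).
  have h2 := H (mk3 (- coord l 2) 0 (coord l 0)).
  move: h1 h2; rewrite !dot3 !mk3_0 !mk3_1 !mk3_2 => h1 h2.
  have {}h1 := h1 ltac:(ring); have {}h2 := h2 ltac:(ring).
  apply: vec3P; rewrite !coordZ; [by rewrite divfK|apply: lin_solve => //; lin h1|apply: lin_solve => //; lin h2].
- exists (coord g 1 / coord l 1).
  have h1 := H (mk3 (coord l 1) (- coord l 0) 0).
  have h2 := H (mk3 0 (- coord l 2) (coord l 1)).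
  move: h1 h2; rewrite !dot3 !mk3_0 !mk3_1 !mk3_2 => h1 h2.
  have {}h1 := h1 ltac:(ring); have {}h2 := h2 ltac:(ring).
  apply: vec3P; rewrite !coordZ; [apply: lin_solve => //; lin h1|by rewrite divfK|apply: lin_solve => //; lin h2].
- exists (coord g 2 / coord l 2).
  have h1 := H (mk3 (coord l 2) 0 (- coord l 0)).
  have h2 := H (mk3 0 (coord l 2) (- coord l 1)).
  move: h1 h2; rewrite !dot3 !mk3_0 !mk3_1 !mk3_2 => h1 h2.
  have {}h1 := h1 ltac:(ring); have {}h2 := h2 ltac:(ring).
  apply: vec3P; rewrite !coordZ; [apply: lin_solve => //; lin h1|apply: lin_solve => //; lin h2|by rewrite divfK].
Qed.

Lemma twoP (l Q P1 P2 : 'rV[F]_3) : dotp l P1 = 0 -> dotp l P2 = 0 ->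
  ~ ((P1 <= Q)%MS /\ (P2 <= Q)%MS) -> exists P, dotp l P = 0 /\ ~~ (P <= Q)%MS.
Proof.
move=> e1 e2 hn; case: (boolP (P1 <= Q)%MS) => h1; last by exists P1.
case: (boolP (P2 <= Q)%MS) => h2; last by exists P2.
by case: hn.
Qed.

Lemma exists_P (l Q : 'rV[F]_3) : l != 0 -> exists P, dotp l P = 0 /\ ~~ (P <= Q)%MS.
Proof.
move=> /nz3 [] hk.
- apply: (@twoP l Q (mk3 (- coord l 1) (coord l 0) 0) (mk3 (- coord l 2) 0 (coord l 0)));
    rewrite ?dot3 ?mk3_0 ?mk3_1 ?mk3_2; try ring.
  case=> /sub_rVP [a ea] /sub_rVP [b eb].
  have := congr1 (fun v => coord v 1) ea; have := congr1 (fun v => coord v 2) ea.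
  have := congr1 (fun v => coord v 2) eb.
  rewrite /= !coordZ ?mk3_0 ?mk3_1 ?mk3_2 => e3 e2 e1.
  move/eqP: e2; rewrite eq_sym mulf_eq0 => /orP [/eqP a0|/eqP q0].
    by move: hk; rewrite e1 a0 mul0r eqxx.
  by move: hk; rewrite e3 q0 mulr0 eqxx.
- apply: (@twoP l Q (mk3 (coord l 1) (- coord l 0) 0) (mk3 0 (- coord l 2) (coord l 1)));
    rewrite ?dot3 ?mk3_0 ?mk3_1 ?mk3_2; try ring.
  case=> /sub_rVP [a ea] /sub_rVP [b eb].
  have := congr1 (fun v => coord v 0) ea; have := congr1 (fun v => coord v 2) ea.
  have := congr1 (fun v => coord v 2) eb.
  rewrite /= !coordZ ?mk3_0 ?mk3_1 ?mk3_2 => e3 e2 e1.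
  move/eqP: e2; rewrite eq_sym mulf_eq0 => /orP [/eqP a0|/eqP q0].
    by move: hk; rewrite e1 a0 mul0r eqxx.
  by move: hk; rewrite e3 q0 mulr0 eqxx.
- apply: (@twoP l Q (mk3 (coord l 2) 0 (- coord l 0)) (mk3 0 (coord l 2) (- coord l 1)));
    rewrite ?dot3 ?mk3_0 ?mk3_1 ?mk3_2; try ring.
  case=> /sub_rVP [a ea] /sub_rVP [b eb].
  have := congr1 (fun v => coord v 0) ea; have := congr1 (fun v => coord v 1) ea.
  have := congr1 (fun v => coord v 1) eb.
  rewrite /= !coordZ ?mk3_0 ?mk3_1 ?mk3_2 => e3 e2 e1.
  move/eqP: e2; rewrite eq_sym mulf_eq0 => /orP [/eqP a0|/eqP q0].
    by move: hk; rewrite e1 a0 mul0r eqxx.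
  by move: hk; rewrite e3 q0 mulr0 eqxx.
Qed.

Lemma dotpZl c (a b : 'rV[F]_3) : dotp (c *: a) b = c * dotp a b.
Proof. rewrite !dot3 !coordZ; ring. Qed.
Lemma dotpZr c (a b : 'rV[F]_3) : dotp a (c *: b) = c * dotp a b.
Proof. rewrite !dot3 !coordZ; ring. Qed.

Lemma key_dvd (f : homog F d) Q P :
  ('X^2 %| restr f Q P) = (valh f Q == 0) && (dotp (Jg f Q) P == 0).
Proof.
rewrite -[restr f Q P](subrK ((valh f Q)%:P + (dotp (Jg f Q) P)%:P * 'X)).
by rewrite dvdp_addr ?restr_dvd // dvdX2.
Qed.

Lemma tangentE (f : homog F d) Q l : l != 0 -> dotp l Q = 0 ->
  tangentb f Q l = (valh f Q == 0) && [exists c : F, Jg f Q == c *: l].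
Proof.
move=> l0 lQ; apply/idP/idP.
- move/forallP => H.
  have hH P : dotp l P = 0 -> ~~ (P <= Q)%MS -> 
      (valh f Q == 0) && (dotp (Jg f Q) P == 0).
    move=> e1 e2; have := H P; rewrite /on_line -/(dotp l P) e1 eqxx /= e2 /=.
    by rewrite key_dvd.
  have [P0 [e1 e2]] := exists_P Q l0.
  have /andP[/eqP v0 _] := hH P0 e1 e2.
  have hg P : dotp l P = 0 -> dotp (Jg f Q) P = 0.
    move=> e; case: (boolP (P <= Q)%MS) => hP.
      by case/sub_rVP: hP => a ->; rewrite dotpZr Euler v0 !mulr0.
    by have /andP[_ /eqP] := hH P e hP.
  have [c gc] := kernel_prop l0 hg.
  by rewrite v0 eqxx /=; apply/existsP; exists c; rewrite gc.
- case/andP => /eqP v0 /existsP [c /eqP gc].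
  apply/forallP => P; apply/implyP => hl; apply/implyP => _.
  move: hl; rewrite /on_line -/(dotp l P) => /eqP hl.
  by rewrite key_dvd v0 gc dotpZl hl mulr0 eqxx.
Qed.

Definition J Q (f : homog F d) : F * 'rV[F]_3 := (valh f Q, Jg f Q).
Definition Hp Q (w : F * 'rV[F]_3) := dotp w.2 Q == d%:R * w.1.

Lemma J_H Q f : Hp Q (J Q f).
Proof. by rewrite /Hp /J /= Euler. Qed.

Lemma JD Q (f g : homog F d) : J Q (f + g) = J Q f + J Q g.
Proof.
rewrite /J; congr (_, _).
  by rewrite !valhE -big_split; apply: eq_bigr => t _ /=; rewrite ffunE mulrDl.
apply/rowP => i; rewrite !mxE !pderhE -big_split; apply: eq_bigr => t _ /=.
by rewrite ffunE !mulrDl.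
Qed.

Lemma J0 Q : J Q 0 = 0.
Proof.
rewrite /J; congr (_, _).
  by rewrite valhE big1 // => t _; rewrite ffunE mul0r.
apply/rowP => i; rewrite !mxE pderhE big1 // => t _; rewrite ffunE !mul0r; exact: erefl.
Qed.

Lemma sum_delta (G : mon d -> F) a t :
  \sum_s (a * (s == t)%:R) * G s = a * G t.
Proof.
rewrite (bigD1 t) //= eqxx mulr1 big1 ?addr0 // => s /negbTE ->.
by rewrite mulr0 mul0r.
Qed.

Definition comb a b c (t1 t2 t3 : mon d) : homog F d :=
  [ffun s => a * (s == t1)%:R + b * (s == t2)%:R + c * (s == t3)%:R].

Lemma sum_comb (G : mon d -> F) a b c t1 t2 t3 :
  \sum_s comb a b c t1 t2 t3 s * G s = a * G t1 + b * G t2 + c * G t3.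
Proof.
under eq_bigr do rewrite ffunE !mulrDl.
by rewrite !big_split /= !sum_delta.
Qed.

Lemma valh_comb Q a b c t1 t2 t3 :
  valh (comb a b c t1 t2 t3) Q = a * Mt Q t1 + b * Mt Q t2 + c * Mt Q t3.
Proof. by rewrite valhE sum_comb. Qed.
Lemma pderh_comb Q i a b c t1 t2 t3 :
  pderh (comb a b c t1 t2 t3) i Q = a * Dt Q i t1 + b * Dt Q i t2 + c * Dt Q i t3.
Proof. by rewrite pderhE (sum_comb (Dt Q i)). Qed.

Lemma mkm_lt a b : (a + b <= d -> a < d.+1)%N. Proof. lia. Qed.
Lemma mkm_lt' a b : (a + b <= d -> b < d.+1)%N. Proof. lia. Qed.
Definition mkm a b (h : (a + b <= d)%N) : mon d :=
  exist _ (Ordinal (mkm_lt h), Ordinal (mkm_lt' h)) h.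

Lemma H_det Q (w w' : F * 'rV[F]_3) k : (k < 3)%N -> coord Q k != 0 ->
  Hp Q w -> Hp Q w' -> w.1 = w'.1 ->
  (forall j, (j < 3)%N -> j != k -> coord w.2 j = coord w'.2 j) -> w = w'.
Proof.
case: w w' => [v g] [v' g']; rewrite /Hp /= => hk qk /eqP h /eqP h' ev hj.
move: h'; rewrite -ev -h !dot3 => e.
congr pair; move: hk qk e; case: k hj => [|[|[|//]]] hj _ qk e; apply: vec3P;
  try (apply: hj => //; fail).
- by apply: (mulIf qk); move: e; rewrite (hj 1%N) // (hj 2%N) // => /addIr /addIr.
- by apply: (mulIf qk); move: e; rewrite (hj 0%N) // (hj 2%N) // => /addIr /addrI.
- by apply: (mulIf qk); move: e; rewrite (hj 0%N) // (hj 1%N) // => /addrI.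
Qed.

Lemma J_surj Q w : (0 < d)%N -> Q != 0 -> Hp Q w -> exists f, J Q f = w.
Proof.
case: w => v g hd /nz3 hQ hw.
case: hQ => hk.
- have h1 : (d + 0 <= d)%N by lia. have h2 : (d - 1 + 1 <= d)%N by lia. have h3 : (d - 1 + 0 <= d)%N by lia.
  pose t1 := mkm h1; pose t2 := mkm h2; pose t3 := mkm h3.
  have E1 : (d - (d - 1) - 1 = 0)%N by lia. have E2 : (d - (d - 1) = 1)%N by lia.
  have q2 : coord Q 0 ^+ (d - 1) != 0 by rewrite expf_neq0.
  have q2' : coord Q 0 ^+ d != 0 by rewrite expf_neq0.
  pose b := coord g 1 / coord Q 0 ^+ (d - 1).
  pose c := coord g 2 / coord Q 0 ^+ (d - 1).
  pose a := (v - b * coord Q 0 ^+ (d - 1) * coord Q 1 - c * coord Q 0 ^+ (d - 1) * coord Q 2) / coord Q 0 ^+ d.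
  exists (comb a b c t1 t2 t3).
  apply: (@H_det Q _ _ 0) => //; first exact: J_H.
    rewrite /J /= valh_comb /Mt /t1 /t2 /t3 /mexp /= ?E1 ?subn0 ?E2 ?subnn !expr0 ?expr1.
    by rewrite /a /b /c; field; rewrite q2 q2'.
  move=> j hj hjk; rewrite /J /= /Jg (coord_row (fun i => pderh _ i Q)) //.
  rewrite pderh_comb /Dt /t1 /t2 /t3 /mexp /=.
  have: (j == 1%N) || (j == 2%N) by move: hj hjk; case: j => [|[|[|]]].
  case/orP => /eqP -> /=; rewrite ?E1 ?subn0 ?E2 ?subnn ?expr0 ?expr1 ?mul0r ?mul1r.
    by rewrite ?mulr0 ?mulr1 ?add0r ?addr0 /b divfK.
  by rewrite ?mulr0 ?mulr1 ?add0r ?addr0 /c divfK.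
- have h1 : (0 + d <= d)%N by lia. have h2 : (1 + (d - 1) <= d)%N by lia. have h3 : (0 + (d - 1) <= d)%N by lia.
  pose t1 := mkm h1; pose t2 := mkm h2; pose t3 := mkm h3.
  have E1 : (d - 1 - (d - 1) = 0)%N by lia. have E2 : (d - (d - 1) = 1)%N by lia.
  have q2 : coord Q 1 ^+ (d - 1) != 0 by rewrite expf_neq0.
  have q2' : coord Q 1 ^+ d != 0 by rewrite expf_neq0.
  pose b := coord g 0 / coord Q 1 ^+ (d - 1).
  pose c := coord g 2 / coord Q 1 ^+ (d - 1).
  pose a := (v - b * coord Q 0 * coord Q 1 ^+ (d - 1) - c * coord Q 1 ^+ (d - 1) * coord Q 2) / coord Q 1 ^+ d.
  exists (comb a b c t1 t2 t3).
  apply: (@H_det Q _ _ 1) => //; first exact: J_H.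
    rewrite /J /= valh_comb /Mt /t1 /t2 /t3 /mexp /= ?E1 ?subn0 ?E2 ?subnn !expr0 ?expr1.
    by rewrite /a /b /c; field; rewrite q2 q2'.
  move=> j hj hjk; rewrite /J /= /Jg (coord_row (fun i => pderh _ i Q)) //.
  rewrite pderh_comb /Dt /t1 /t2 /t3 /mexp /=.
  have: (j == 0%N) || (j == 2%N) by move: hj hjk; case: j => [|[|[|]]].
  case/orP => /eqP -> /=; rewrite ?E1 ?subn0 ?E2 ?subnn ?expr0 ?expr1 ?mul0r ?mul1r.
    by rewrite ?mulr0 ?mulr1 ?add0r ?addr0 /b divfK.
  by rewrite ?mulr0 ?mulr1 ?add0r ?addr0 /c divfK.
- have h1 : (0 + 0 <= d)%N by lia. have h2 : (1 + 0 <= d)%N by lia. have h3 : (0 + 1 <= d)%N by lia.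
  pose t1 := mkm h1; pose t2 := mkm h2; pose t3 := mkm h3.
  have q2 : coord Q 2 ^+ (d - 1) != 0 by rewrite expf_neq0.
  have q2' : coord Q 2 ^+ d != 0 by rewrite expf_neq0.
  pose b := coord g 0 / coord Q 2 ^+ (d - 1).
  pose c := coord g 1 / coord Q 2 ^+ (d - 1).
  pose a := (v - b * coord Q 0 * coord Q 2 ^+ (d - 1) - c * coord Q 1 * coord Q 2 ^+ (d - 1)) / coord Q 2 ^+ d.
  exists (comb a b c t1 t2 t3).
  apply: (@H_det Q _ _ 2) => //; first exact: J_H.
    rewrite /J /= valh_comb /Mt /t1 /t2 /t3 /mexp /= !subn0 !expr0 ?expr1.
    by rewrite /a /b /c; field; rewrite q2 q2'.
  move=> j hj hjk; rewrite /J /= /Jg (coord_row (fun i => pderh _ i Q)) //.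
  rewrite pderh_comb /Dt /t1 /t2 /t3 /mexp /=.
  have: (j == 0%N) || (j == 1%N) by move: hj hjk; case: j => [|[|[|]]].
  case/orP => /eqP -> /=; rewrite ?subn0 ?subnn ?expr0 ?expr1 ?mul0r ?mul1r.
    by rewrite !mulr0 add0r addr0 /b divfK.
  by rewrite !mulr0 !add0r /c divfK.
Qed.
End Alg.


Section Count.
Variables (V W : finType) (phi : V -> W) (z0 : V).
Hypothesis Htr : forall x0, exists tau : V -> V, injective tau /\
  forall y, (phi (tau y) == phi x0) = (phi y == phi z0).

Let Im := [set phi x | x in V].
Let K := #|[set x | phi x == phi z0]|.

Lemma fib_card w : w \in Im -> #|[set x | phi x == w]| = K.
Proof.
case/imsetP => x0 _ ->; have [tau [itau htau]] := Htr x0.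
rewrite -(card_preimset _ itau); apply: eq_card => y.
by rewrite !inE htau.
Qed.

Lemma card_pre (P : pred W) : #|[set x | P (phi x)]| = (#|[set w in Im | P w]| * K)%N.
Proof.
rewrite -sum1_card (partition_big phi (fun w => (w \in Im) && P w)); last first.
  by move=> x; rewrite inE => hx; rewrite imset_f // hx.
rewrite /= -[in RHS]sum_nat_const; apply: eq_big => [w|w /andP[hw hP]].
  by rewrite inE.
rewrite -(fib_card hw) -sum1_card; apply: eq_bigl => x; rewrite !inE.
by apply/andP/eqP => [[_ /eqP]//|e]; rewrite e.
Qed.

Lemma fiber_count (P : pred W) :
  (#|[set x | P (phi x)]| * #|Im| = #|[set w in Im | P w]| * #|V|)%N.
Proof.
have hV : #|V| = (#|Im| * K)%N.
  have -> : #|Im| = #|[set w in Im | predT w]| by apply: eq_card => w; rewrite !inE andbT.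
  by rewrite -card_pre; apply: eq_card => x; rewrite !inE.
by rewrite card_pre hV mulnAC mulnA.
Qed.
End Count.

Section Appl.
Variable F : finFieldType.

Lemma dot_surj (Q : 'rV[F]_3) : Q != 0 -> forall c, exists v, dotp v Q = c.
Proof.
move=> /nz3 [] hk c.
- by exists (mk3 (c / coord Q 0) 0 0); rewrite dot3 mk3_0 mk3_1 mk3_2 !mul0r !addr0 divfK.
- by exists (mk3 0 (c / coord Q 1) 0); rewrite dot3 mk3_0 mk3_1 mk3_2 !mul0r addr0 add0r divfK.
- by exists (mk3 0 0 (c / coord Q 2)); rewrite dot3 mk3_0 mk3_1 mk3_2 !mul0r !add0r divfK.
Qed.

Lemma dotpDl (a b c : 'rV[F]_3) : dotp (a + b) c = dotp a c + dotp b c.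
Proof. rewrite !dot3 !coordD; ring. Qed.

Lemma ker_lemma (V : finType) (phi : V -> F) (z0 : V) :
  (forall x0, exists tau : V -> V, injective tau /\
     forall y, (phi (tau y) == phi x0) = (phi y == phi z0)) ->
  phi z0 = 0 -> (forall c, exists x, phi x = c) ->
  (#|[set x | phi x == 0%R]| * #|F| = #|V|)%N.
Proof.
move=> Htr h0 hs; have := fiber_count Htr (pred1 (0 : F)).
have -> : [set phi x | x in V] = [set: F].
  by apply/setP => c; rewrite inE; have [x <-] := hs c; rewrite imset_f.
rewrite cardsT.
have -> : #|[set w in [set: F] | pred1 (0 : F) w]| = 1%N.
  by rewrite -(cards1 (0 : F)); apply: eq_card => w; rewrite !inE.
by rewrite mul1n.
Qed.

Lemma card_ker (Q : 'rV[F]_3) : Q != 0 -> #|[set g : 'rV[F]_3 | dotp g Q == 0]| = (#|F| ^ 2)%N.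
Proof.
move=> hQ; have := @ker_lemma _ (fun g => dotp g Q) 0.
rewrite card_mx => h; have {}h := h _ _ (dot_surj hQ).
have hF : (0 < #|F|)%N by apply/card_gt0P; exists 0.
apply/eqP; rewrite -(eqn_pmul2r hF) h //.
- by rewrite -expnSr.
- move=> x0; exists (fun y => y + x0); split; first exact: addIr.
  by move=> y; rewrite dotpDl -{2}[dotp x0 Q]add0r (inj_eq (addIr _)) [dotp 0 Q]dot3 !coord0v !mul0r !addr0.
- by rewrite dot3 !coord0v !mul0r !addr0.
Qed.
End Appl.

Section Appl2.
Variables (F : finFieldType) (d : nat) (Q : 'rV[F]_3).
Hypotheses (hd : (0 < d)%N) (hQ : Q != 0).

Lemma cardF_gt0 : (0 < #|F|)%N. Proof. by apply/card_gt0P; exists 0. Qed.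

Lemma card_H : #|[set w | Hp d Q w]| = (#|F| ^ 3)%N.
Proof.
pose phi (w : F * 'rV[F]_3) := dotp w.2 Q - d%:R * w.1.
have Htr : forall x0 : (F * 'rV[F]_3)%type, exists tau : (F * 'rV[F]_3)%type -> (F * 'rV[F]_3)%type, injective tau /\
    forall y, (phi (tau y) == phi x0) = (phi y == phi 0).
  move=> x0; exists (fun y => y + x0); split; first exact: addIr.
  move=> y; rewrite /phi /= dotpDl.
  have -> : dotp y.2 Q + dotp x0.2 Q - d%:R * (y.1 + x0.1) =
     (dotp y.2 Q - d%:R * y.1) + (dotp x0.2 Q - d%:R * x0.1) by ring.
  by rewrite -{2}[dotp x0.2 Q - d%:R * x0.1]add0r (inj_eq (addIr _)) /= [dotp 0 Q]dot3 !coord0v !mul0r !addr0 mulr0 subr0.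
have h0 : phi 0 = 0 by rewrite /phi /= [dotp 0 Q]dot3 !coord0v !mul0r !addr0 mulr0 subr0.
have hs : forall c, exists x, phi x = c.
  move=> c; have [v hv] := dot_surj hQ c; exists (0, v).
  by rewrite /phi /= hv mulr0 subr0.
have := ker_lemma Htr h0 hs.
rewrite card_prod card_mx => h.
have e : [set w | Hp d Q w] = [set w | phi w == 0].
  by apply/setP => w; rewrite !inE /Hp subr_eq0.
rewrite e; apply/eqP; rewrite -(eqn_pmul2r cardF_gt0) h.
by rewrite mul1n mulnC.
Qed.

Lemma J_tr (x0 : homog F d) : exists tau : homog F d -> homog F d, injective tau /\
  forall y, (J Q (tau y) == J Q x0) = (J Q y == J Q (0 : homog F d)).
Proof.
exists (fun y => y + x0); split; first exact: addIr.
by move=> y; rewrite JD -{2}[J Q x0]add0r (inj_eq (addIr _)) J0.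
Qed.

Lemma Im_J : [set J Q f | f in homog F d] = [set w | Hp d Q w].
Proof.
apply/setP => w; rewrite inE; apply/imsetP/idP => [[f _ ->]|hw].
  exact: J_H.
by have [f hf] := J_surj hd hQ hw; exists f.
Qed.

Lemma mud_J (R : realType) (A : pred (homog F d)) (P : pred (F * 'rV[F]_3)) :
  (forall f, A f = P (J Q f)) ->
  mud R A = #|[set w | Hp d Q w && P w]|%:R / (#|F| ^ 3)%:R.
Proof.
move=> hA; have := fiber_count J_tr P.
rewrite Im_J card_H.
have -> : #|[set w in [set w | Hp d Q w] | P w]| = #|[set w | Hp d Q w && P w]|.
  by apply: eq_card => w; rewrite !inE.
have -> : #|[set x : homog F d | P (J Q x)]| = #|[set f : homog F d | A f]|.
  by apply: eq_card => f; rewrite !inE hA.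
rewrite /mud => /(congr1 (fun n => n%:R : R)); rewrite !natrM => e.
have hV : (#|{: homog F d}|%:R : R) != 0.
  by rewrite pnatr_eq0 -lt0n; apply/card_gt0P; exists 0.
have h3 : ((#|F| ^ 3)%:R : R) != 0 by rewrite pnatr_eq0 -lt0n expn_gt0 cardF_gt0.
apply: (canLR (mulfK hV)); rewrite mulrAC -e mulfK //.
by rewrite -!natrM pnatr_eq0 -lt0n !muln_gt0 cardF_gt0.
Qed.

Definition Tp (l : 'rV[F]_3) (w : F * 'rV[F]_3) := (w.1 == 0) && [exists c : F, w.2 == c *: l].

Lemma scal_inj (l : 'rV[F]_3) c c' : l != 0 -> c *: l = c' *: l -> c = c'.
Proof.
move=> /nz3 hl e.
have e0 := congr1 (fun v => coord v 0) e; have e1 := congr1 (fun v => coord v 1) e.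
have e2 := congr1 (fun v => coord v 2) e; move: e0 e1 e2; rewrite /= !coordZ.
by case: hl => hk; [move=> + _ _ | move=> _ + _ | move=> _ _ +]; apply: mulIf.
Qed.

Lemma tangentT (l : 'rV[F]_3) (f : homog F d) : l != 0 -> dotp l Q = 0 -> tangentb f Q l = Tp l (J Q f).
Proof. by move=> l0 lQ; rewrite tangentE. Qed.

Lemma singJ (f : homog F d) : singularb f Q = (J Q f == 0).
Proof.
rewrite /singularb /J; have -> : (0 : F * 'rV[F]_3) = (0, 0) by [].
rewrite xpair_eqE; congr (_ && _); apply/forallP/eqP => [h|e i].
  by apply/rowP => i; rewrite !mxE; apply/eqP/h.
by have := congr1 (fun m : 'rV[F]_3 => m ord0 i) e; rewrite /Jg !mxE => ->.
Qed.

Lemma Hp_line (l : 'rV[F]_3) c : dotp l Q = 0 -> Hp d Q (0, c *: l).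
Proof. by move=> lQ; rewrite /Hp /= dotpZl lQ !mulr0. Qed.

Lemma card_T (l : 'rV[F]_3) : l != 0 -> dotp l Q = 0 ->
  #|[set w | Hp d Q w && Tp l w]| = #|F|.
Proof.
move=> l0 lQ.
have -> : [set w | Hp d Q w && Tp l w] = [set (0, c *: l) | c in F].
  apply/setP => [[v g]]; rewrite !inE; apply/andP/imsetP => [[_ /andP[/eqP /= -> /existsP [c /eqP ->]]]|[c _ [-> ->]]].
    by exists c.
  by split; [exact: Hp_line | rewrite /Tp /= eqxx; apply/existsP; exists c].
by rewrite card_imset // => c c' [] /(scal_inj l0).
Qed.

Lemma card_AL (l : 'rV[F]_3) : l != 0 -> dotp l Q = 0 ->
  #|[set w | Hp d Q w && (Tp l w && (w != 0))]| = #|F|.-1.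
Proof.
move=> l0 lQ.
have -> : [set w | Hp d Q w && (Tp l w && (w != 0))] = [set (0, c *: l) | c in [set~ 0]].
  apply/setP => [[v g]]; rewrite !inE; apply/andP/imsetP => [[_ /andP[/andP[/eqP /= -> /existsP [c /eqP ->]] hn]]|[c hc [-> ->]]].
    exists c => //; rewrite !inE; apply: contraNneq hn => ->.
    by rewrite scale0r.
  split; first exact: Hp_line.
  rewrite /Tp /= eqxx /=; apply/andP; split; first by apply/existsP; exists c.
  apply/eqP => [[]] /eqP; rewrite scaler_eq0 (negbTE l0) orbF.
  by apply/negP; move: hc; rewrite !inE.
rewrite card_in_imset ?cardsC1 // => c c' _ _ [] /(scal_inj l0).
by [].
Qed.

Lemma card_v0 : #|[set w | Hp d Q w && (w.1 == 0)]| = (#|F| ^ 2)%N.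
Proof.
have -> : [set w | Hp d Q w && (w.1 == 0)] = [set (0, g) | g in [set g | dotp g Q == 0]].
  apply/setP => [[v g]]; rewrite !inE; apply/andP/imsetP => [[hw /= /eqP e]|[g' hg [-> ->]]].
    by exists g; [rewrite inE; move: hw; rewrite /Hp /= e mulr0 | rewrite e].
  by move: hg; rewrite /Hp inE /= mulr0 => ->.
by rewrite card_imset ?card_ker // => g g' [].
Qed.
End Appl2.

Section Real.
Variable R : realType.
Variables (F : finFieldType) (d : nat).

Lemma cardV_gt0 : (0 < #|{: homog F d}|)%N. Proof. by apply/card_gt0P; exists 0. Qed.

Lemma mud_not (A : pred (homog F d)) : mud R (fun f => ~~ A f) = 1 - mud R A.
Proof.
rewrite /mud.
have -> : [set f | ~~ A f] = ~: [set f | A f] by apply/setP => f; rewrite !inE.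
have hV : (#|{: homog F d}|%:R : R) != 0 by rewrite pnatr_eq0 -lt0n cardV_gt0.
rewrite cardsCs finset.setCK natrB ?max_card // mulrBl divff //.
Qed.

Lemma mud_le (A B : pred (homog F d)) : (forall f, A f -> B f) -> mud R A <= mud R B.
Proof.
move=> hAB; rewrite /mud ler_wpM2r // ?invr_ge0 // ler_nat.
by apply: subset_leq_card; apply/fintype.subsetP => f; rewrite !inE; apply: hAB.
Qed.

Lemma mud_ge0 (A : pred (homog F d)) : 0 <= mud R A.
Proof. by rewrite /mud divr_ge0. Qed.

Lemma mud_le1 (A : pred (homog F d)) : mud R A <= 1.
Proof.
have hV : (0 : R) < #|{: homog F d}|%:R by rewrite ltr0n cardV_gt0.
by rewrite /mud ler_pdivrMr // mul1r ler_nat max_card.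
Qed.
End Real.


Section Vals.
Variable R : realType.
Variables (F : finFieldType) (d : nat) (Q : 'rV[F]_3).
Hypotheses (hd : (0 < d)%N) (hQ : Q != 0).
Let q : R := #|F|%:R.

Lemma mud_T (l : 'rV[F]_3) : l != 0 -> dotp l Q = 0 ->
  mud R (fun f : homog F d => tangentb f Q l) = q / q ^+ 3.
Proof.
move=> l0 lQ; rewrite (mud_J hd hQ R (P := Tp l)) => [|f]; last exact: tangentT.
by rewrite card_T // natrX.
Qed.

Lemma mud_NT (l : 'rV[F]_3) : l != 0 -> dotp l Q = 0 ->
  mud R (fun f : homog F d => ~~ tangentb f Q l) = 1 - q / q ^+ 3.
Proof. by move=> l0 lQ; rewrite mud_not mud_T. Qed.

Lemma mud_AL (l : 'rV[F]_3) : l != 0 -> dotp l Q = 0 ->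
  mud R (@ALb F d Q l) = (q - 1) / q ^+ 3.
Proof.
move=> l0 lQ; rewrite (mud_J hd hQ R (P := fun w => Tp l w && (w != 0))) => [|f]; last first.
  by rewrite /ALb tangentT // singJ.
rewrite card_AL // natrX; congr (_ / _).
by rewrite /q -{2}(prednK (cardF_gt0 F)) mulrS addrC addrK.
Qed.

Lemma mud_v0 : mud R (fun f : homog F d => valh f Q == 0) = q ^+ 2 / q ^+ 3.
Proof.
rewrite (mud_J hd hQ R (P := fun w => w.1 == 0)) => [|f] //.
by rewrite card_v0 // !natrX.
Qed.
End Vals.

Section Lines.
Variables (F : finFieldType) (d : nat) (Q : 'rV[F]_3) (Ls : seq 'rV[F]_3).
Hypotheses (hQ : Q != 0) (hL : lines_through Q Ls).

Lemma lt_mem l : l \in Ls -> l != 0 /\ dotp l Q = 0.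
Proof. by case: hL => h _ /h [l0 /eqP lQ]. Qed.

Lemma A0_sub (f : homog F d) : Ls != [::] -> A0b Q Ls f -> valh f Q != 0.
Proof.
move=> hne; apply: contraTN => /eqP v0.
rewrite /A0b -has_predC.
have hgQ : dotp (Jg f Q) Q = 0 by rewrite Euler v0 mulr0.
have [l hl hT] : exists2 l, l \in Ls & tangentb f Q l.
  have [g0|gn0] := eqVneq (Jg f Q) 0.
    have [l hl] : exists l, l \in Ls by move: hne; case: (Ls) => // l s _; exists l; exact: mem_head.
    exists l => //; have [l0 lQ] := lt_mem hl.
    rewrite tangentT // /Tp /J /= v0 eqxx /=; apply/existsP; exists 0.
    by rewrite scale0r g0.
  case: hL => _ /(_ _ gn0) h.
  have /h hc1 : on_line (Jg f Q) Q by rewrite /on_line -/(dotp _ _) hgQ.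
  have : has (fun l => (Jg f Q == l)%MS) Ls by rewrite has_count hc1.
  case/hasP => l hl /andP [/sub_rVP [c hc] _].
  exists l => //; have [l0 lQ] := lt_mem hl.
  rewrite tangentT // /Tp /J /= v0 eqxx /=; apply/existsP; exists c.
  by rewrite hc.
by apply/hasP; exists l => //=; rewrite hT.
Qed.

Lemma count2 (T : eqType) (p : pred T) (s : seq T) x0 i j : (i < j)%N -> (j < size s)%N ->
  p (nth x0 s i) -> p (nth x0 s j) -> (1 < count p s)%N.
Proof.
move=> ij js pi pj.
rewrite -(cat_take_drop j s) count_cat (drop_nth x0 js) /= pj.
have : has p (take j s).
  by apply/(has_nthP x0); exists i; [rewrite size_take js | rewrite nth_take].
rewrite has_count /=; lia.
Qed.

Lemma size_bound : (size Ls <= #|F|.+1)%N.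
Proof.
pose n := size Ls.
pose S := [set ic : 'I_n * F | ic.2 != 0].
pose mp (ic : 'I_n * F) := ic.2 *: Ls`_(ic.1).
have hinj : {in S &, injective mp}.
  move=> [i c] [j c']; rewrite !inE /mp /= => hc hc' e.
  have [l0 lQ] := lt_mem (mem_nth 0 (ltn_ord i)).
  have [l0' lQ'] := lt_mem (mem_nth 0 (ltn_ord j)).
  case: (eqVneq i j) => [eij|ij].
    by move: e; rewrite eij => /(scal_inj l0') ->.
  exfalso.
  have hmx : (Ls`_i == Ls`_j)%MS.
    apply/andP; split; apply/sub_rVP.
      by exists (c^-1 * c'); rewrite -scalerA -e scalerA mulVf // scale1r.
    by exists (c'^-1 * c); rewrite -scalerA e scalerA mulVf // scale1r.
  case: hL => _ /(_ _ l0) hc1.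
  have := hc1 ltac:(by rewrite /on_line -/(dotp _ _) lQ).
  have hp : forall k : 'I_n, k \in [:: i; j] -> (Ls`_i == Ls`_k)%MS.
    by move=> k; rewrite !inE => /orP [] /eqP ->; rewrite ?hmx // submx_refl.
  case: (ltngtP i j) => [lt|gt|/val_inj eq]; last by rewrite eq eqxx in ij.
    have := @count2 _ (fun l => (Ls`_i == l)%MS) Ls 0 i j lt (ltn_ord j).
    by rewrite submx_refl hmx => /(_ isT isT) h1 h2; rewrite h2 in h1.
  have := @count2 _ (fun l => (Ls`_i == l)%MS) Ls 0 j i gt (ltn_ord i).
  by rewrite submx_refl hmx => /(_ isT isT) h1 h2; rewrite h2 in h1.
pose K := [set g : 'rV[F]_3 | dotp g Q == 0].
have hsub : [set mp x | x in S] \subset K :\ 0.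
  apply/fintype.subsetP => g /imsetP [[i c] hc ->]; rewrite !inE /mp /=.
  have [l0 lQ] := lt_mem (mem_nth 0 (ltn_ord i)).
  rewrite scaler_eq0 negb_or (negbTE l0) andbT; move: hc; rewrite inE /= => -> /=.
  by rewrite dotpZl lQ mulr0.
have := subset_leq_card hsub; rewrite card_in_imset //.
have -> : #|S| = (n * #|F|.-1)%N.
  have -> : S = finset.setX [set: 'I_n] [set~ (0 : F)] by apply/setP => [[i c]]; rewrite !inE.
  by rewrite cardsX cardsT card_ord cardsC1.
have hK := cardsD1 0 K; rewrite card_ker // inE [dotp 0 Q]dot3 !coord0v !mul0r !addr0 eqxx in hK.
have hF := card_finNzRing_gt1 F.
move: hK; rewrite /n; move: (#|K :\ 0|) (#|F|) hF => k f hf hK.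
nia.
Qed.
End Lines.

Import numFieldNormedType.Exports.
Local Open Scope classical_set_scope.

Section RealFacts.
Variable R : realType.

Lemma bernoulli (x : R) m : 0 <= x -> x <= 1 -> 1 - m%:R * x <= (1 - x) ^+ m.
Proof.
move=> x0 x1; elim: m => [|m IH]; first by rewrite mul0r subr0 expr0.
have h1 : 0 <= 1 - x by rewrite subr_ge0.
rewrite exprS; apply: le_trans (ler_wpM2l h1 IH).
rewrite mulrS; have hm : 0 <= m%:R :> R by [].
nra.
Qed.

Lemma prod_cst n (h : 'I_n -> R) c : (forall i, h i = c) -> \prod_(i < n) h i = c ^+ n.
Proof.
move=> hc; rewrite (eq_bigr (fun _ => c)); last by move=> i _; exact: hc.
by rewrite -(big_mkord xpredT (fun _ => c)) prodr_const_nat subn0.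
Qed.

Lemma prod_cst1 n (h : 'I_n -> R) c j : (forall i, h i = c) ->
  \prod_(i < n | i != j) h i = c ^+ n.-1.
Proof.
move=> hc; rewrite (eq_bigr (fun _ => c)); last by move=> i _; exact: hc.
by rewrite (@prodr_const _ _ (predC1 j)) cardC1 card_ord.
Qed.

Lemma lim_cst (u : nat -> R) c l : (forall d, (0 < d)%N -> u d = c) ->
  u @ \oo --> l -> l = c.
Proof.
move=> hu hl.
have hc : u @ \oo --> c.
  by apply: cvg_near_cst; exists 1%N => // k /= hk; apply: hu.
by rewrite -(cvg_lim (@Rhausdorff R) hl) (cvg_lim (@Rhausdorff R) hc).
Qed.

Lemma lim_leB (u : nat -> R) B l : (forall d, (0 < d)%N -> u d <= B) ->
  u @ \oo --> l -> l <= B.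
Proof.
move=> hu hl; rewrite -(cvg_lim (@Rhausdorff R) hl).
apply: limr_le; first by apply/cvg_ex; exists l.
by exists 1%N => // k /= hk; apply: hu.
Qed.
End RealFacts.

Theorem lemma4p6 (R : realType) (F : finFieldType) (Q : 'rV[F]_3)
  (Ls : seq 'rV[F]_3) :
  Q != 0 -> lines_through Q Ls ->
  (exists d0 : nat, forall d : nat, (d0 <= d)%N ->
     mud R (@A0b F d Q Ls) <=
       (1 - (#|F|%:R : R) ^- 2)^-1 *
       \prod_(i < size Ls) mud R (fun f : homog F d => ~~ tangentb f Q (Ls`_i))
     /\ forall j : 'I_(size Ls),
       mud R (@ALb F d Q (Ls`_j)) <=
         mud R (fun f : homog F d => tangentb f Q (Ls`_j)) *
         \prod_(i < size Ls | i != j)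
            mud R (fun f : homog F d => ~~ tangentb f Q (Ls`_i)))
  /\
  (forall (lA0 : R) (lN lT lA : nat -> R),
     (fun d => mud R (@A0b F d Q Ls)) @ \oo --> lA0 ->
     (forall i, (i < size Ls)%N ->
        (fun d => mud R (fun f : homog F d => ~~ tangentb f Q (Ls`_i))) @ \oo --> lN i) ->
     (forall i, (i < size Ls)%N ->
        (fun d => mud R (fun f : homog F d => tangentb f Q (Ls`_i))) @ \oo --> lT i) ->
     (forall i, (i < size Ls)%N ->
        (fun d => mud R (@ALb F d Q (Ls`_i))) @ \oo --> lA i) ->
     lA0 <= (1 - (#|F|%:R : R) ^- 2)^-1 * \prod_(i < size Ls) lN i
     /\ forall j : 'I_(size Ls),
          lA j <= lT j * \prod_(i < size Ls | i != j) lN i).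
Proof.
move=> hQ hL.
have hF := card_finNzRing_gt1 F.
set q : R := #|F|%:R.
have q2 : 2 <= q by rewrite /q ler_nat.
have q0 : q != 0 by apply: lt0r_neq0; apply: lt_le_trans q2.
set x := q / q ^+ 3.
have hx : q ^- 2 = x by rewrite /x; field.
have x0 : 0 <= x by rewrite -hx invr_ge0 exprn_ge0 // ?(le_trans _ q2).
have x1 : x <= 1.
  rewrite -hx invf_le1; first by rewrite expr2; nra.
  by rewrite exprn_gt0 // (lt_le_trans _ q2).
have x1' : 0 < 1 - x.
  rewrite subr_gt0 -hx invf_lt1; first by rewrite expr2; nra.
  by rewrite exprn_gt0 // (lt_le_trans _ q2).
set n := size Ls.
have hn := size_bound hQ hL.
have hmem (i : nat) : (i < n)%N -> Ls`_i != 0 /\ dotp Ls`_i Q = 0.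
  by move=> hi; apply: (lt_mem hL); apply: mem_nth.
have N_eq d (i : nat) : (0 < d)%N -> (i < n)%N ->
    mud R (fun f : homog F d => ~~ tangentb f Q (Ls`_i)) = 1 - x.
  by move=> hd hi; have [l0 lQ] := hmem i hi; rewrite mud_NT.
have T_eq d (i : nat) : (0 < d)%N -> (i < n)%N ->
    mud R (fun f : homog F d => tangentb f Q (Ls`_i)) = x.
  by move=> hd hi; have [l0 lQ] := hmem i hi; rewrite mud_T.
have A_eq d (i : nat) : (0 < d)%N -> (i < n)%N ->
    mud R (@ALb F d Q (Ls`_i)) = (q - 1) / q ^+ 3.
  by move=> hd hi; have [l0 lQ] := hmem i hi; rewrite mud_AL.
have K1 d : (0 < d)%N -> mud R (@A0b F d Q Ls) <= (1 - x)^-1 * (1 - x) ^+ n.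
  move=> hd; case hn0 : n => [|n'].
    rewrite expr0 mulr1; apply: le_trans (mud_le1 _ _) _.
    by rewrite invf_ge1 // lerBlDr lerDl.
  have hne : Ls != [::] by apply/eqP => e; rewrite /n e in hn0.
  have hle : mud R (@A0b F d Q Ls) <= mud R (fun f : homog F d => valh f Q != 0).
    by apply: mud_le => f; apply: A0_sub.
  apply: le_trans hle _.
  rewrite mud_not mud_v0 // [(1 - x) ^+ _]exprS mulKf ?lt0r_neq0 //.
  apply: le_trans (bernoulli _ x0 x1).
  have hn' : n'%:R <= q by rewrite /q ler_nat; move: hn; rewrite -/n hn0; lia.
  have -> : q ^+ 2 / q ^+ 3 = q * x by rewrite /x; field.
  by rewrite lerB // ler_wpM2r.
have K2 : (q - 1) / q ^+ 3 <= x * (1 - x) ^+ n.-1.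
  have -> : (q - 1) / q ^+ 3 = x * (1 - q * x) by rewrite /x; field.
  apply: ler_wpM2l => //; apply: le_trans (bernoulli _ x0 x1).
  have hn' : n.-1%:R <= q by rewrite /q ler_nat; lia.
  by rewrite lerB // ler_wpM2r.
split.
  exists 1%N => d hd; rewrite hx; split.
    by rewrite (@prod_cst _ _ _ (1 - x)) ?K1 // => i; apply: N_eq.
  move=> j; rewrite A_eq // T_eq // (@prod_cst1 _ _ _ (1 - x)) // => i.
  exact: N_eq.
move=> lA0 lN lT lA hA0 hN hT hA.
have lNi (i : nat) : (i < n)%N -> lN i = 1 - x.
  by move=> hi; apply: (lim_cst _ (hN i hi)) => d hd; apply: N_eq.
have lTi (i : nat) : (i < n)%N -> lT i = x.
  by move=> hi; apply: (lim_cst _ (hT i hi)) => d hd; apply: T_eq.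
have lAi (i : nat) : (i < n)%N -> lA i = (q - 1) / q ^+ 3.
  by move=> hi; apply: (lim_cst _ (hA i hi)) => d hd; apply: A_eq.
rewrite hx; split.
  rewrite (@prod_cst _ _ (fun i : 'I_n => lN i) (1 - x)) => [|i]; last exact: lNi.
  by apply: (lim_leB _ hA0) => d hd; apply: K1.
move=> j; rewrite lAi // lTi // (@prod_cst1 _ _ (fun i : 'I_n => lN i) (1 - x)) //.
by move=> i; apply: lNi.
Qed.
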